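(* Let $M=\mathbb R^3$ with the Euclidean metric, $\mathcal D=[0,1]$, and let $r,h:I\to\mathbb R$ be smooth with $r>0$ and $h$ nowhere zero. Consider the path of helices $c(s,t)=(r(s)\cos t,\ r(s)\sin t,\ h(s)t)$. Then $c$ is horizontal and a geodesic if and only if $h'=0$ and \[ \Big((r')^2\Big(\sqrt{r^2+h^2}+\frac{1}{\sqrt{r^2+h^2}}\Big)\Big)'=0. \]
   Context: $I=[0,1]$; $'$ denotes $\partial_s$. For a path $c:I\times\mathcal D\to\mathbb R^3$ of immersed curves write $\dot c=\partial_t c$, $c'=\partial_s c$, $\omega=|\dot c|>0$, $T=\dot c/\omega$, and $\nabla_TX=\omega^{-1}\partial_tX$ for vector fields $X$ along $c$. With $\eta=c'-\nabla_T\nabla_T c'$, the path is called horizontal if $\langle\eta,T\rangle=0$ everywhere on $I\times\mathcal D$. The first order Sobolev metric is $G_{\gamma}(h,k)=\int_{\mathcal D} \big(\langle h,k\rangle+\langle\nabla_Th,\nabla_Tk\rangle\big)\,\omega\,dt$, the speed is $\nu(s)=\sqrt{G_{c(s,\cdot)}(c',c')}$, and following the paper the path is called a geodesic if $\nu$ is constant in $s$. *)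

(* Defs.v *)
From Stdlib Require Import Reals.
From Coquelicot Require Import Coquelicot.
Open Scope R_scope.

Definition R3 := (R * R * R)%type.
Definition mk3 (a b c : R) : R3 := (a, b, c).
Definition x1 (v : R3) : R := fst (fst v).
Definition x2 (v : R3) : R := snd (fst v).
Definition x3 (v : R3) : R := snd v.
Definition dot3 (u v : R3) : R := x1 u * x1 v + x2 u * x2 v + x3 u * x3 v.
Definition norm3 (v : R3) : R := sqrt (dot3 v v).
Definition add3 (u v : R3) : R3 := mk3 (x1 u + x1 v) (x2 u + x2 v) (x3 u + x3 v).
Definition sub3 (u v : R3) : R3 := mk3 (x1 u - x1 v) (x2 u - x2 v) (x3 u - x3 v).
Definition scal3 (a : R) (v : R3) : R3 := mk3 (a * x1 v) (a * x2 v) (a * x3 v).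

(* A path of curves c : I x D -> R^3, written c s t (s in I = [0,1], t in D = [0,1]).
   Vector fields along c are maps of the same type. *)
Definition field := R -> R -> R3.

(* partial derivatives in t (dot) and in s (prime), componentwise *)
Definition d_t (X : field) : field := fun s t =>
  mk3 (Derive (fun u => x1 (X s u)) t)
      (Derive (fun u => x2 (X s u)) t)
      (Derive (fun u => x3 (X s u)) t).
Definition d_s (X : field) : field := fun s t =>
  mk3 (Derive (fun u => x1 (X u t)) s)
      (Derive (fun u => x2 (X u t)) s)
      (Derive (fun u => x3 (X u t)) s).

Definition omega (c : field) (s t : R) : R := norm3 (d_t c s t).
Definition unitT (c : field) : field := fun s t => scal3 (/ omega c s t) (d_t c s t).
Definition nablaT (c : field) (X : field) : field :=
  fun s t => scal3 (/ omega c s t) (d_t X s t).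

Definition eta (c : field) : field :=
  fun s t => sub3 (d_s c s t) (nablaT c (nablaT c (d_s c)) s t).

Definition inI (x : R) : Prop := 0 <= x <= 1.

Definition horizontal (c : field) : Prop :=
  forall s t, inI s -> inI t -> dot3 (eta c s t) (unitT c s t) = 0.

Definition G1 (c : field) (s : R) (h k : field) : R :=
  RInt (fun t => (dot3 (h s t) (k s t) + dot3 (nablaT c h s t) (nablaT c k s t))
                 * omega c s t) 0 1.

Definition speed (c : field) (s : R) : R := sqrt (G1 c s (d_s c) (d_s c)).

(* geodesic (in the sense of the paper): the speed is constant in s on I *)
Definition geodesic (c : field) : Prop :=
  exists C : R, forall s, inI s -> speed c s = C.

Definition smooth (f : R -> R) : Prop := forall (n : nat) (x : R), ex_derive_n f n x.

Definition helix_path (r h : R -> R) : field :=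
  fun s t => mk3 (r s * cos t) (r s * sin t) (h s * t).

(* Main.v *)
Require Import Defs.
From Stdlib Require Import Reals Lra.
From Coquelicot Require Import Coquelicot.
Open Scope R_scope.

Section S.
Variables r h : R -> R.
Hypothesis Dr : forall s, ex_derive r s.
Hypothesis Dh : forall s, ex_derive h s.
Let c := helix_path r h.
Let W s := sqrt (r s ^ 2 + h s ^ 2).
Let rp := Derive r.
Let hp := Derive h.

Lemma mk3_eq a b d a' b' d' : a = a' -> b = b' -> d = d' -> mk3 a b d = mk3 a' b' d'.
Proof. intros -> -> ->; reflexivity. Qed.

Lemma dtc s t : d_t c s t = mk3 (-(r s * sin t)) (r s * cos t) (h s).
Proof.
  unfold d_t, c, helix_path; cbn [x1 x2 x3 mk3 fst snd]; apply mk3_eq;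
  apply is_derive_unique; auto_derive; auto; ring.
Qed.

Lemma om s t : omega c s t = W s.
Proof.
  unfold omega, norm3. rewrite dtc. unfold dot3, W; cbn [x1 x2 x3 mk3 fst snd].
  f_equal. pose proof (sin2_cos2 t). unfold Rsqr in H. nra.
Qed.

Lemma dsc s t : d_s c s t = mk3 (rp s * cos t) (rp s * sin t) (hp s * t).
Proof.
  unfold d_s, c, helix_path; cbn [x1 x2 x3 mk3 fst snd]; apply mk3_eq;
  apply is_derive_unique; auto_derive; auto; unfold rp, hp; rewrite Rmult_1_l; reflexivity.
Qed.

Lemma N1 s t : nablaT c (d_s c) s t = scal3 (/ W s) (mk3 (-(rp s * sin t)) (rp s * cos t) (hp s)).
Proof.
  unfold nablaT. rewrite om. f_equal. unfold d_t.
  apply mk3_eq; erewrite Derive_ext; try (intro u; rewrite dsc; reflexivity);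
  cbn [x1 x2 x3 mk3 fst snd];
  apply is_derive_unique; auto_derive; auto; ring.
Qed.

Lemma N2 s t : nablaT c (nablaT c (d_s c)) s t =
  scal3 (/ W s) (mk3 (/ W s * -(rp s * cos t)) (/ W s * -(rp s * sin t)) 0).
Proof.
  unfold nablaT at 1. rewrite om. f_equal. unfold d_t.
  apply mk3_eq; erewrite Derive_ext; try (intro u; rewrite N1; reflexivity);
  unfold scal3; cbn [x1 x2 x3 mk3 fst snd];
  apply is_derive_unique; auto_derive; auto; ring.
Qed.

Lemma hor s t : dot3 (eta c s t) (unitT c s t) = / W s * (hp s * t * h s).
Proof.
  unfold eta, unitT. rewrite N2, dsc, dtc, om.
  unfold dot3, sub3, scal3; cbn [x1 x2 x3 mk3 fst snd]. ring.
Qed.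

Lemma spd s : hp s = 0 -> 0 < W s ->
  speed c s = sqrt (rp s ^ 2 * (W s + / W s)).
Proof.
  intros H0 HW. unfold speed, G1. f_equal.
  assert (E : forall t, (dot3 (d_s c s t) (d_s c s t) +
     dot3 (nablaT c (d_s c) s t) (nablaT c (d_s c) s t)) * omega c s t
     = rp s ^ 2 * (W s + / W s)).
  { intros t. rewrite N1, dsc, om, H0. unfold dot3, scal3; cbn [x1 x2 x3 mk3 fst snd].
    pose proof (sin2_cos2 t). unfold Rsqr in H.
    rewrite <- (Rmult_1_r (rp s ^ 2)), <- H. field. lra. }
  rewrite (RInt_ext _ (fun _ => rp s ^ 2 * (W s + / W s))).
  - rewrite RInt_const. unfold scal; simpl; unfold mult; simpl. ring.
  - intros t _. apply E.
Qed.
End S.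

Lemma loc_const (F : R -> R) s l K : inI s -> is_derive F s l ->
  (forall u, inI u -> F u = K) -> l = 0.
Proof.
  intros Hs Hd HK. apply is_derive_Reals in Hd.
  destruct (Req_dec l 0) as [|Hl]; auto. exfalso.
  assert (Hal : 0 < Rabs l) by (apply Rabs_pos_lt; auto).
  destruct (Hd (Rabs l / 2)) as [d Hdd]; [lra|].
  pose proof (cond_pos d) as dpos.
  unfold inI in Hs.
  destruct (Rlt_or_le s 1) as [Hs1|Hs1].
  - set (e := Rmin (d/2) (1 - s)).
    assert (e0 : 0 < e) by (unfold e; apply Rmin_glb_lt; lra).
    assert (e1 : e <= d/2) by apply Rmin_l.
    assert (e2 : e <= 1 - s) by apply Rmin_r.
    specialize (Hdd e ltac:(lra) ltac:(rewrite Rabs_pos_eq; lra)).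
    rewrite (HK (s + e)) in Hdd by (unfold inI; lra).
    rewrite (HK s) in Hdd by (unfold inI; lra).
    replace ((K - K) / e - l) with (- l) in Hdd by (field; lra).
    rewrite Rabs_Ropp in Hdd. lra.
  - set (e := Rmin (d/2) 1).
    assert (e0 : 0 < e) by (unfold e; apply Rmin_glb_lt; lra).
    assert (e1 : e <= d/2) by apply Rmin_l.
    assert (e2 : e <= 1) by apply Rmin_r.
    specialize (Hdd (- e) ltac:(lra) ltac:(rewrite Rabs_Ropp, Rabs_pos_eq; lra)).
    rewrite (HK (s + - e)) in Hdd by (unfold inI; lra).
    rewrite (HK s) in Hdd by (unfold inI; lra).
    replace ((K - K) / - e - l) with (- l) in Hdd by (field; lra).
    rewrite Rabs_Ropp in Hdd. lra.
Qed.

Theorem mainTheorem7 (r h : R -> R) :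
  smooth r -> smooth h ->
  (forall s, inI s -> 0 < r s) ->
  (forall s, inI s -> h s <> 0) ->
  (horizontal (helix_path r h) /\ geodesic (helix_path r h) <->
   (forall s, inI s -> Derive h s = 0) /\
   (forall s, inI s ->
      Derive (fun u => (Derive r u) ^ 2 *
                (sqrt (r u ^ 2 + h u ^ 2) + / sqrt (r u ^ 2 + h u ^ 2))) s = 0)).
Proof.
  intros Sr Sh Hr Hh.
  assert (Dr : forall s, ex_derive r s) by (intro s; exact (Sr 1%nat s)).
  assert (Dh : forall s, ex_derive h s) by (intro s; exact (Sh 1%nat s)).
  assert (DDr : forall s, ex_derive (Derive r) s) by (intro s; exact (Sr 2%nat s)).
  set (F := fun u => (Derive r u) ^ 2 *
                (sqrt (r u ^ 2 + h u ^ 2) + / sqrt (r u ^ 2 + h u ^ 2))).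
  assert (Pos : forall s, inI s -> 0 < r s ^ 2 + h s ^ 2).
  { intros s Hs. specialize (Hr s Hs). nra. }
  assert (Wpos : forall s, inI s -> 0 < sqrt (r s ^ 2 + h s ^ 2)).
  { intros s Hs. apply sqrt_lt_R0. auto. }
  assert (exF : forall s, inI s -> ex_derive F s).
  { intros s Hs. specialize (Pos s Hs). specialize (Wpos s Hs). unfold F.
    auto_derive. replace (r s * (r s * 1) + h s * (h s * 1)) with (r s ^ 2 + h s ^ 2) by ring.
    repeat split; auto; try lra. }
  assert (Fnn : forall s, inI s -> 0 <= F s).
  { intros s Hs. specialize (Wpos s Hs). unfold F.
    apply Rmult_le_pos. nra. pose proof (Rinv_0_lt_compat _ Wpos). lra. }
  split.
  - intros [Hor [C HC]].
    assert (H0 : forall s, inI s -> Derive h s = 0).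
    { intros s Hs. assert (I1 : inI 1) by (unfold inI; lra).
      specialize (Hor s 1 Hs I1). rewrite (hor r h Dr Dh) in Hor.
      specialize (Wpos s Hs). specialize (Hh s Hs).
      apply Rmult_integral in Hor. destruct Hor as [Ho|Ho].
      - exfalso. apply (Rinv_neq_0_compat _ (Rgt_not_eq _ _ Wpos)). exact Ho.
      - rewrite Rmult_1_r in Ho. apply Rmult_integral in Ho. destruct Ho; auto. contradiction. }
    split; auto.
    intros s Hs. apply (loc_const F s _ (C * C) Hs).
    + apply Derive_correct. auto.
    + intros u Hu. rewrite <- (HC u Hu). rewrite (spd r h Dr Dh u (H0 u Hu) (Wpos u Hu)).
      rewrite sqrt_sqrt; auto. apply (Fnn u Hu).
  - intros [H0 HF]. split.
    + intros s t Hs Ht. rewrite (hor r h Dr Dh), (H0 s Hs). ring.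
    + exists (sqrt (F 0)). intros s Hs.
      rewrite (spd r h Dr Dh s (H0 s Hs) (Wpos s Hs)). fold (F s). f_equal.
      destruct Hs as [Hs0 Hs1].
      destruct (MVT_gen F 0 s (Derive F)) as [x [Hx E]].
      * intros x Hx. rewrite Rmin_left in Hx by lra. rewrite Rmax_right in Hx by lra.
        apply Derive_correct. apply exF. unfold inI; lra.
      * intros x Hx. rewrite Rmin_left in Hx by lra. rewrite Rmax_right in Hx by lra.
        apply (proj2 (continuity_pt_filterlim F x)). apply (ex_derive_continuous F x). apply exF. unfold inI; lra.
      * rewrite Rmin_left in Hx by lra. rewrite Rmax_right in Hx by lra.
        rewrite HF in E by (unfold inI; lra). lra.
Qed.
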